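(* For every integer $T=6k+3$ with $k\ge 1$ and every $\sigma\in\mathfrak S_3$, the vector $\sigma c$ with $c=[5k+2,\,2k+1,\,-4k-1,\,-k,\,-k,\,2k+1]$ defines a facet of $P^T$.
   Context: For an integer $T\ge 2$, let $\Omega_T$ be the set of words $w=s_1s_2\cdots s_T$ over $\{1,2,3\}$ with $s_l\neq s_{l+1}$ for $l=1,\dots,T-1$. For $w\in\Omega_T$ and an ordered pair $ij$, $i\neq j$, let $x_{ij}(w)$ be the number of indices $1\le l\le T-1$ with $s_ls_{l+1}=ij$. Vectors of $\mathbb R^6$ are indexed in the order $[x_{12},x_{13},x_{21},x_{23},x_{31},x_{32}]$. Let $a_w=[x_{12}(w),\dots,x_{32}(w)]$ and $P^T=\mathrm{conv}\{a_w:w\in\Omega_T\}$. $\mathfrak S_3$ acts on $\mathbb R^6$ by $(\sigma c)_{ij}=c_{\sigma(i)\sigma(j)}$. A vector $c$ defines a facet of $P^T$ if $c\cdot a_w\ge0$ for all $w\in\Omega_T$ and $\{x\in P^T: c\cdot x=0\}$ is a facet of $P^T$. *)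

(* Defs.v *)
(* Letters 1,2,3 of the paper are encoded as 0,1,2 : 'I_3. *)
From mathcomp Require Import all_boot all_order all_algebra perm.
Set Implicit Arguments. Unset Strict Implicit. Unset Printing Implicit Defensive.
Import Order.TTheory GRing.Theory Num.Theory.
Local Open Scope ring_scope.

Definition word (T : nat) := T.-tuple 'I_3.

Definition inOmega (T : nat) (w : word T) : Prop :=
  forall l : nat, (l.+1 < T)%N -> nth ord0 w l != nth ord0 w l.+1.

(* x_ij(w) = #{ 1 <= l <= T-1 : s_l s_{l+1} = ij }  (0-based here). *)
Definition xcount (T : nat) (w : word T) (i j : 'I_3) : nat :=
  \sum_(l < T.-1) ((nth ord0 w l == i) && (nth ord0 w l.+1 == j)).

(* Coordinate order [x12, x13, x21, x23, x31, x32]. *)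
Definition pair_of (k : 'I_6) : 'I_3 * 'I_3 :=
  match val k with
  | 0 => (inord 0, inord 1)
  | 1 => (inord 0, inord 2)
  | 2 => (inord 1, inord 0)
  | 3 => (inord 1, inord 2)
  | 4 => (inord 2, inord 0)
  | _ => (inord 2, inord 1)
  end.

Definition idx_of (i j : 'I_3) : 'I_6 :=
  odflt ord0 [pick k : 'I_6 | pair_of k == (i, j)].

Definition aw (R : realFieldType) (T : nat) (w : word T) : 'rV[R]_6 :=
  \row_k ((xcount w (pair_of k).1 (pair_of k).2)%:R).

Definition dotv (R : realFieldType) (c x : 'rV[R]_6) : R :=
  \sum_(k < 6) c 0 k * x 0 k.

Definition sigma_act (R : realFieldType) (s : 'S_3) (c : 'rV[R]_6) : 'rV[R]_6 :=
  \row_k c 0 (idx_of (s (pair_of k).1) (s (pair_of k).2)).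

Definition PT (R : realFieldType) (T : nat) (x : 'rV[R]_6) : Prop :=
  exists lam : word T -> R,
    (forall w, 0 <= lam w) /\ (forall w, ~ inOmega w -> lam w = 0) /\
    \sum_w lam w = 1 /\ x = \sum_w lam w *: aw R w.

Definition aff_indep (R : realFieldType) (n : nat) (p : 'I_n.+1 -> 'rV[R]_6) : bool :=
  row_free (\matrix_(i < n) (p (lift ord0 i) - p ord0)).

Definition has_affdim (R : realFieldType) (S : 'rV[R]_6 -> Prop) (d : nat) : Prop :=
  (exists p : 'I_d.+1 -> 'rV[R]_6, (forall i, S (p i)) /\ aff_indep p) /\
  (forall p : 'I_d.+2 -> 'rV[R]_6, (forall i, S (p i)) -> ~~ aff_indep p).

Definition defines_facet (R : realFieldType) (T : nat) (c : 'rV[R]_6) : Prop :=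
  (forall w : word T, inOmega w -> 0 <= dotv c (aw R w)) /\
  exists d : nat, has_affdim (@PT R T) d.+1 /\
    has_affdim (fun x => @PT R T x /\ dotv c x = 0) d.

Definition cvec (R : realFieldType) (k : nat) : 'rV[R]_6 :=
  \row_i (match val i with
          | 0 => (5 * k + 2)%:R
          | 1 => (2 * k + 1)%:R
          | 2 => - (4 * k + 1)%:R
          | 3 => - k%:R
          | 4 => - k%:R
          | _ => (2 * k + 1)%:R
          end).

(* Main.v *)
Require Import Defs.
From mathcomp Require Import all_boot all_order all_algebra perm.
From mathcomp Require Import ring lra zify.
Set Implicit Arguments. Unset Strict Implicit. Unset Printing Implicit Defensive.
Import Order.TTheory GRing.Theory Num.Theory.

Definition o0 : 'I_3 := @Ordinal 3 0 isT.
Definition o1 : 'I_3 := @Ordinal 3 1 isT.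
Definition o2 : 'I_3 := @Ordinal 3 2 isT.

Definition pair' (k : 'I_6) : 'I_3 * 'I_3 :=
  match val k with
  | 0 => (o0, o1) | 1 => (o0, o2) | 2 => (o1, o0)
  | 3 => (o1, o2) | 4 => (o2, o0) | _ => (o2, o1) end.

Lemma pair_ofE k : pair_of k = pair' k.
Proof.
rewrite /pair_of /pair'; case: k => [[|[|[|[|[|[|n]]]]]] Hk] /=;
  by congr pair; apply: val_inj; rewrite /= inordK.
Qed.

Lemma pair_neq k : (pair' k).1 != (pair' k).2.
Proof. by case: k => [[|[|[|[|[|[|n]]]]]] Hk]. Qed.

Lemma pair_inj : injective pair'.
Proof.
move=> k k' H; apply/val_inj; move/(congr1 (fun p => (val p.1, val p.2))): H.
by case: k => [[|[|[|[|[|[|n]]]]]] Hk]; case: k' => [[|[|[|[|[|[|n']]]]]] Hk'] //= [].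
Qed.

Lemma pair_surj (a b : 'I_3) : a != b -> exists k, pair' k = (a, b).
Proof.
case: a => [[|[|[|a]]] Ha] //; case: b => [[|[|[|b]]] Hb] // _.
- by exists (@Ordinal 6 0 isT); congr pair; apply: val_inj.
- by exists (@Ordinal 6 1 isT); congr pair; apply: val_inj.
- by exists (@Ordinal 6 2 isT); congr pair; apply: val_inj.
- by exists (@Ordinal 6 3 isT); congr pair; apply: val_inj.
- by exists (@Ordinal 6 4 isT); congr pair; apply: val_inj.
- by exists (@Ordinal 6 5 isT); congr pair; apply: val_inj.
Qed.

Lemma pair_idx (a b : 'I_3) : a != b -> pair' (idx_of a b) = (a, b).
Proof.
move=> ab; rewrite /idx_of; case: pickP => [k /eqP|H]; first by rewrite pair_ofE.
by have [k Hk] := pair_surj ab; move: (H k); rewrite pair_ofE Hk eqxx.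
Qed.

Lemma idx_pair k : idx_of (pair' k).1 (pair' k).2 = k.
Proof. by apply: pair_inj; rewrite pair_idx ?pair_neq // -surjective_pairing. Qed.

Lemma pair_eq_idx (a b : 'I_3) k : a != b -> (pair' k == (a, b)) = (k == idx_of a b).
Proof.
move=> ab; apply/eqP/eqP => [H|->]; first by rewrite -(idx_pair k) H.
exact: pair_idx.
Qed.

Local Open Scope ring_scope.

Fixpoint psum (V : nmodType) (F : 'I_3 -> 'I_3 -> V) (s : seq 'I_3) : V :=
  if s is x :: t then (if t is y :: _ then F x y + psum F t else 0) else 0.

Fixpoint adjdiff (s : seq 'I_3) : bool :=
  if s is x :: t then (if t is y :: _ then (x != y) && adjdiff t else true) else true.

Lemma psum0 (V : nmodType) (F : 'I_3 -> 'I_3 -> V) : psum F [::] = 0.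
Proof. by []. Qed.
Lemma psum1 (V : nmodType) (F : 'I_3 -> 'I_3 -> V) x : psum F [:: x] = 0.
Proof. by []. Qed.
Lemma psum2 (V : nmodType) (F : 'I_3 -> 'I_3 -> V) x y t :
  psum F (x :: y :: t) = F x y + psum F (y :: t).
Proof. by []. Qed.
Lemma adj1 x : adjdiff [:: x]. Proof. by []. Qed.
Lemma adj2 x y t : adjdiff (x :: y :: t) = (x != y) && adjdiff (y :: t).
Proof. by []. Qed.
Arguments psum : simpl never.
Arguments adjdiff : simpl never.

Lemma psum_nth (V : nmodType) (F : 'I_3 -> 'I_3 -> V) s x0 :
  \sum_(l < (size s).-1) F (nth x0 s l) (nth x0 s l.+1) = psum F s.
Proof.
elim: s => [|x t IH] /=; first by rewrite big_ord0.
case: t IH => [|y t] IH /=; first by rewrite big_ord0.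
by rewrite big_ord_recl psum2 -IH.
Qed.

Lemma psum_cat (V : nmodType) (F : 'I_3 -> 'I_3 -> V) s1 x s2 :
  psum F (s1 ++ x :: s2) = psum F (rcons s1 x) + psum F (x :: s2).
Proof.
elim: s1 => [|a t IH]; first by rewrite psum1 add0r.
case: t IH => [|b t] IH; first by rewrite /= !psum2 psum1 addr0.
by rewrite cat_cons rcons_cons !psum2 IH addrA.
Qed.

Lemma adjdiff_cat s1 x s2 :
  adjdiff (s1 ++ x :: s2) = adjdiff (rcons s1 x) && adjdiff (x :: s2).
Proof.
elim: s1 => [|a t IH] //.
case: t IH => [|b t] IH; first by rewrite /= !adj2 adj1 andbT.
by rewrite cat_cons rcons_cons !adj2 IH andbA.
Qed.

Lemma psum_ext (V : nmodType) (F G : 'I_3 -> 'I_3 -> V) s :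
  adjdiff s -> (forall a b, a != b -> F a b = G a b) -> psum F s = psum G s.
Proof.
move=> + FG; elim: s => [|x t IH] //.
case: t IH => [|y t] IH //.
by rewrite adj2 !psum2 => /andP[xy /IH ->]; rewrite FG.
Qed.

Lemma psumD (V : nmodType) (F G : 'I_3 -> 'I_3 -> V) s :
  psum (fun a b => F a b + G a b) s = psum F s + psum G s.
Proof.
elim: s => [|x t IH]; first by rewrite !psum0 addr0.
case: t IH => [|y t] IH; first by rewrite !psum1 addr0.
by rewrite !psum2 IH addrACA.
Qed.

Lemma psumB (V : zmodType) (F G : 'I_3 -> 'I_3 -> V) s :
  psum (fun a b => F a b - G a b) s = psum F s - psum G s.
Proof.
elim: s => [|x t IH]; first by rewrite !psum0 subr0.
case: t IH => [|y t] IH; first by rewrite !psum1 subr0.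
by rewrite !psum2 IH opprD addrACA.
Qed.

Lemma psumZ (R : comNzRingType) (c : R) F s :
  psum (fun a b => c * F a b) s = c * psum F s.
Proof.
elim: s => [|x t IH]; first by rewrite !psum0 mulr0.
case: t IH => [|y t] IH; first by rewrite !psum1 mulr0.
by rewrite !psum2 IH mulrDr.
Qed.

Lemma psum_const (V : nmodType) (c : V) s :
  psum (fun _ _ => c) s = c *+ (size s).-1.
Proof.
elim: s => [|x t IH] //.
case: t IH => [|y t] IH //.
by rewrite psum2 IH /= mulrS.
Qed.

Lemma psum_nat (R : nzSemiRingType) (F : 'I_3 -> 'I_3 -> nat) s :
  (psum F s)%:R = psum (fun a b => (F a b)%:R) s :> R.
Proof.
elim: s => [|x t IH] //.
case: t IH => [|y t] IH //.
by rewrite !psum2 natrD IH.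
Qed.

Lemma psum_tele (V : zmodType) (g : 'I_3 -> V) x t :
  psum (fun a b => g b - g a) (x :: t) = g (last x t) - g x.
Proof.
elim: t x => [|y t IH] x; first by rewrite psum1 subrr.
by rewrite psum2 IH /= addrC addrA subrK.
Qed.

Lemma psum_sumr (V : nmodType) (I : finType) (G : I -> 'I_3 -> 'I_3 -> V) s :
  psum (fun a b => \sum_i G i a b) s = \sum_i psum (G i) s.
Proof.
elim: s => [|x t IH]; first by rewrite psum0 big1.
case: t IH => [|y t] IH; first by rewrite psum1 big1 // => i; rewrite psum1.
by rewrite psum2 IH -big_split; apply: eq_bigr => i _; rewrite psum2.
Qed.

Lemma psum_mulsum (R : comNzRingType) (I : finType) (c : I -> R) (G : I -> 'I_3 -> 'I_3 -> R) s :
  \sum_i c i * psum (G i) s = psum (fun a b => \sum_i c i * G i a b) s.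
Proof. by rewrite psum_sumr; apply: eq_bigr => i _; rewrite psumZ. Qed.

Lemma asc_bound s x : adjdiff (x :: s) ->
  (size s <= 3 * psum (fun a b => ((a < b)%N : nat)) (x :: s) + val x)%N.
Proof.
elim: s x => [|y t IH] x //; rewrite adj2 psum2 => /andP[xy /IH].
have := ltn_ord x; have := ltn_ord y.
move: xy; rewrite -val_eqE /=.
case: (ltnP x y) => /= H1 H2 H3 H4; lia.
Qed.

Lemma xcountE T (w : word T) i j :
  xcount w i j = psum (fun a b => ((a == i) && (b == j) : nat)) w.
Proof. by rewrite /xcount -(psum_nth _ _ ord0) size_tuple. Qed.

Lemma awE (R : realFieldType) T (w : word T) k :
  aw R w 0 k = psum (fun a b => (((a == (pair' k).1) && (b == (pair' k).2)) : nat)%:R) w.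
Proof. by rewrite mxE xcountE psum_nat pair_ofE. Qed.

Lemma sum_pick (R : realFieldType) (c : 'rV[R]_6) (a b : 'I_3) : a != b ->
  \sum_k c 0 k * (((a == (pair' k).1) && (b == (pair' k).2)) : nat)%:R = c 0 (idx_of a b).
Proof.
move=> ab; rewrite (bigD1 (idx_of a b)) //= pair_idx // !eqxx mulr1 big1 ?addr0 //.
move=> k kn; have := pair_eq_idx k ab; rewrite (negbTE kn).
by case: (pair' k) => p q /=; rewrite xpair_eqE eq_sym (eq_sym b) => ->; rewrite mulr0.
Qed.

Lemma dot_aw (R : realFieldType) T (w : word T) (c : 'rV[R]_6) :
  adjdiff w -> dotv c (aw R w) = psum (fun a b => c 0 (idx_of a b)) w.
Proof.
move=> Hw; rewrite /dotv.
under eq_bigr => k _ do rewrite awE.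
rewrite psum_mulsum; apply: psum_ext => // a b ab; exact: sum_pick.
Qed.

Lemma adjP (s : seq 'I_3) x0 :
  adjdiff s <-> (forall l, (l.+1 < size s)%N -> nth x0 s l != nth x0 s l.+1).
Proof.
elim: s => [|x t IH]; first by split.
case: t IH => [|y t] IH; first by split => // _ [|l].
rewrite adj2; split.
- move=> /andP[xy /IH H] [|l] //= Hl; exact: H.
- move=> H; apply/andP; split; first exact: (H 0%N).
  by apply/IH => l Hl; apply: (H l.+1).
Qed.

Lemma omega_adj T (w : word T) : inOmega w <-> adjdiff w.
Proof. by rewrite (adjP _ ord0) size_tuple. Qed.

Lemma idx_valE (a b : 'I_3) : a != b ->
  val (idx_of a b) = match val a, val b with
   | 0, 1 => 0 | 0, 2 => 1 | 1, 0 => 2 | 1, 2 => 3 | 2, 0 => 4 | _, _ => 5 end%N.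
Proof.
move=> ab; have := pair_idx ab; case: (idx_of a b) => [[|[|[|[|[|[|j]]]]]] Hj] //=;
  by case=> <- <-.
Qed.

Lemma valid_id (R : realFieldType) k (hk : (1 <= k)%N) (w : word (6 * k + 3)) :
  adjdiff w -> 0 <= dotv (cvec R k) (aw R w).
Proof.
move=> Hw; rewrite dot_aw //.
pose al : R := (3 * k + 1)%:R.
pose g (x : 'I_3) : R := ((x == o1) : nat)%:R * al.
rewrite (@psum_ext _ _ (fun a b => al * ((a < b)%N : nat)%:R - k%:R + (g b - g a))) //; last first.
  move=> a b ab; rewrite mxE idx_valE // /g /al.
  case: a ab => [[|[|[|a]]] Ha] //; case: b => [[|[|[|b]]] Hb] // _ /=;
  rewrite ?natrD ?natrM; ring.
rewrite psumD psumB psumZ psum_const.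
case: w Hw => [[|x t] /= Hs] Hw; first by rewrite addn3 in Hs.
rewrite psum_tele -psum_nat.
have Hb := asc_bound Hw.
have Ht : size t = (6 * k + 2)%N by move/eqP: Hs; lia.
rewrite Ht in Hb.
set A := psum _ _ in Hb *.
have Hx := ltn_ord x.
have HA : (2 * k + (x == o1) <= A)%N.
  have -> : ((x == o1) : nat) = ((val x == 1%N) : nat) by [].
  move: Hb Hx; case: eqP => /= Hv Hb Hx1; lia.
have [r ->] : exists r, A = (2 * k + (x == o1) + r)%N by exists (A - (2 * k + (x == o1)))%N; lia.
have gl : 0 <= g (last x t) by rewrite /g /al mulr_ge0 ?ler0n.
rewrite /g /al in gl *.
rewrite Ht -mulr_natr ?natrD ?natrM.
have h1 : 0 <= k%:R * r%:R :> R by rewrite mulr_ge0.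
have h2 : 0 <= ((last x t == o1) : nat)%:R * k%:R :> R by rewrite mulr_ge0.
have h3 : 0 <= ((last x t == o1) : nat)%:R :> R by [].
have h4 : 0 <= r%:R :> R by [].
nra.
Qed.

Definition rho_fun (s : 'S_3) (k : 'I_6) : 'I_6 := idx_of (s (pair' k).1) (s (pair' k).2).

Lemma pair_rho s k : pair' (rho_fun s k) = (s (pair' k).1, s (pair' k).2).
Proof. by rewrite pair_idx // (inj_eq perm_inj) pair_neq. Qed.

Lemma rho_inj s : injective (rho_fun s).
Proof.
move=> k1 k2 /(congr1 pair'); rewrite !pair_rho => -[/perm_inj E1 /perm_inj E2].
by apply: pair_inj; rewrite [pair' k1]surjective_pairing [pair' k2]surjective_pairing E1 E2.
Qed.

Definition rho s : 'S_6 := perm (@rho_inj s).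

Lemma rhoE s k : rho s k = rho_fun s k.
Proof. by rewrite permE. Qed.

Lemma rhoV s : ((rho s)^-1)%g = rho (s^-1)%g.
Proof.
have H k : rho (s^-1)%g (rho s k) = k.
  apply: pair_inj; rewrite !rhoE !pair_rho /= !permK.
  by rewrite -surjective_pairing.
apply/permP => j; have := H (((rho s)^-1)%g j); rewrite permKV => ->.
by [].
Qed.

Lemma sigma_actE (R : realFieldType) s (c : 'rV[R]_6) : sigma_act s c = col_perm (rho s) c.
Proof. by apply/matrixP => i j; rewrite !mxE rhoE /rho_fun !pair_ofE (ord1 i). Qed.

Definition wmap T (s : 'S_3) (w : word T) : word T := map_tuple s w.

Lemma wmapK T s (w : word T) : wmap (s^-1)%g (wmap s w) = w.
Proof. by apply: val_inj; rewrite /= -map_comp map_id_in // => x _ /=; rewrite permK. Qed.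

Lemma wmapKV T s (w : word T) : wmap s (wmap (s^-1)%g w) = w.
Proof. by apply: val_inj; rewrite /= -map_comp map_id_in // => x _ /=; rewrite permKV. Qed.

Lemma wmap_inj T s : injective (@wmap T s).
Proof. by move=> w1 w2 E; rewrite -(wmapK s w1) E wmapK. Qed.

Lemma eq_psum (V : nmodType) (F G : 'I_3 -> 'I_3 -> V) t :
  (forall a b, F a b = G a b) -> psum F t = psum G t.
Proof.
move=> FG; elim: t => [|x t IH] //; case: t IH => [|y t] IH //.
by rewrite !psum2 IH FG.
Qed.

Lemma adj_map (s : 'S_3) t : adjdiff (map s t) = adjdiff t.
Proof.
elim: t => [|x t IH] //; case: t IH => [|y t] IH //.
by rewrite map_cons map_cons !adj2 -map_cons IH (inj_eq perm_inj).
Qed.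

Lemma psum_map (V : nmodType) (F : 'I_3 -> 'I_3 -> V) (f : 'I_3 -> 'I_3) t :
  psum F (map f t) = psum (fun a b => F (f a) (f b)) t.
Proof.
elim: t => [|x t IH] //; case: t IH => [|y t] IH //.
by rewrite map_cons map_cons !psum2 -map_cons IH.
Qed.

Lemma aw_wmap (R : realFieldType) T s (w : word T) :
  col_perm (rho s) (aw R w) = aw R (wmap (s^-1)%g w).
Proof.
apply/matrixP => i j; rewrite !mxE !xcountE !pair_ofE rhoE pair_rho /=.
rewrite psum_map; congr (_ %:R); apply: eq_psum => a b.
by rewrite -[(s^-1)%g a == _](inj_eq (@perm_inj _ s)) -[(s^-1)%g b == _](inj_eq (@perm_inj _ s)) !permKV.
Qed.

Lemma col_perm_sum (R : realFieldType) (I : finType) r (lam : I -> R) (A : I -> 'rV[R]_6) :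
  col_perm r (\sum_i lam i *: A i) = \sum_i lam i *: col_perm r (A i).
Proof.
rewrite col_permE mulmx_suml; apply: eq_bigr => i _; by rewrite -scalemxAl col_permE.
Qed.

Lemma PT_perm (R : realFieldType) T s (x : 'rV[R]_6) : PT T x -> PT T (col_perm (rho s) x).
Proof.
move=> [lam [h0 [h1 [h2 ->]]]].
exists (fun v => lam (wmap s v)); split; first by [].
split.
  move=> v Hv; apply: h1; move/omega_adj => Hw; apply: Hv; apply/omega_adj.
  by move: Hw; rewrite /= adj_map.
split.
  by rewrite -h2 [RHS](reindex_inj (@wmap_inj T s)).
rewrite col_perm_sum [RHS](reindex_inj (@wmap_inj T (s^-1)%g)) /=.
by apply: eq_bigr => w _; rewrite wmapKV aw_wmap.
Qed.

Lemma dot_perm (R : realFieldType) (c x : 'rV[R]_6) r :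
  dotv (col_perm r c) x = dotv c (col_perm (r^-1)%g x).
Proof.
rewrite /dotv [LHS](reindex_inj (@perm_inj _ (r^-1)%g)).
by apply: eq_bigr => j _; rewrite !mxE permKV.
Qed.

Lemma row_free_col_perm (R : realFieldType) m (A : 'M[R]_(m, 6)) r :
  row_free (col_perm r A) = row_free A.
Proof. by rewrite col_permE /row_free mxrankMfree // row_free_unit unitmx_perm. Qed.

Lemma diff_col_perm (R : realFieldType) n (p : 'I_n.+1 -> 'rV[R]_6) r :
  \matrix_(i < n) (col_perm r (p (lift ord0 i)) - col_perm r (p ord0)) =
  col_perm r (\matrix_(i < n) (p (lift ord0 i) - p ord0)).
Proof. by apply/matrixP => i j; rewrite !mxE. Qed.

Lemma affdim_transfer (R : realFieldType) (S S' : 'rV[R]_6 -> Prop) r d :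
  has_affdim S d -> (forall x, S' x <-> S (col_perm r x)) -> has_affdim S' d.
Proof.
move=> [[p [Sp Ip]] Hup] E; split.
  exists (fun i => col_perm (r^-1)%g (p i)); split.
    by move=> i; apply/E; rewrite -col_permM mulgV col_perm1.
  by rewrite /aff_indep diff_col_perm row_free_col_perm.
move=> q Sq; apply/negP => Iq.
have := Hup (fun i => col_perm r (q i)) (fun i => proj1 (E _) (Sq i)).
by rewrite /aff_indep diff_col_perm row_free_col_perm -/(aff_indep q) Iq.
Qed.

Lemma valid_sigma (R : realFieldType) k (hk : (1 <= k)%N) s (w : word (6 * k + 3)) :
  inOmega w -> 0 <= dotv (sigma_act s (cvec R k)) (aw R w).
Proof.
move/omega_adj => Hw.
rewrite sigma_actE dot_perm rhoV aw_wmap invgK.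
by apply: valid_id => //=; rewrite adj_map.
Qed.

Lemma face_iff (R : realFieldType) T s (c x : 'rV[R]_6) :
  (PT T x /\ dotv (sigma_act s c) x = 0) <->
  (PT T (col_perm (rho (s^-1)%g) x) /\ dotv c (col_perm (rho (s^-1)%g) x) = 0).
Proof.
rewrite sigma_actE dot_perm rhoV; split => -[H1 H2]; split => //.
- exact: PT_perm.
- have := PT_perm s H1; by rewrite -col_permM -rhoV mulgV col_perm1.
Qed.

Lemma dotv_sum (R : realFieldType) (I : finType) (c : 'rV[R]_6) (lam : I -> R) (A : I -> 'rV[R]_6) :
  dotv c (\sum_i lam i *: A i) = \sum_i lam i * dotv c (A i).
Proof.
rewrite /dotv; under eq_bigr => k _ do rewrite summxE big_distrr /=.
rewrite exchange_big /=; apply: eq_bigr => i _; rewrite big_distrr /=.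
by apply: eq_bigr => k _; rewrite mxE mulrCA.
Qed.

Lemma PT_dot (R : realFieldType) T (c : 'rV[R]_6) (e : R) x :
  (forall w : word T, inOmega w -> dotv c (aw R w) = e) -> PT T x -> dotv c x = e.
Proof.
move=> H [lam [h0 [h1 [h2 ->]]]]; rewrite dotv_sum -[RHS]mul1r -h2 mulr_suml.
apply: eq_bigr => w _; case Hw: (adjdiff w).
  by rewrite H //; apply/omega_adj.
by rewrite h1 ?mul0r // => /omega_adj; rewrite Hw.
Qed.

Lemma rank_orth (R : realFieldType) m r (M : 'M[R]_(m, 6)) (B : 'M[R]_(r, 6)) :
  M *m B^T = 0 -> row_free M -> row_free B -> (m + r <= 6)%N.
Proof.
move=> H fM fB.
have sB : (B <= kermx M^T)%MS.
  by apply/sub_kermxP; rewrite -[B]trmxK -trmx_mul H trmx0.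
have := mxrankS sB; rewrite mxrank_ker mxrank_tr.
have := rank_leq_col M.
move: fM fB; rewrite /row_free => /eqP -> /eqP ->; lia.
Qed.

Lemma diff_orth (R : realFieldType) n r (p : 'I_n.+1 -> 'rV[R]_6) (B : 'M[R]_(r, 6)) (e : 'I_r -> R) :
  (forall l i, dotv (row l B) (p i) = e l) ->
  (\matrix_(i < n) (p (lift ord0 i) - p ord0)) *m B^T = 0.
Proof.
move=> H; apply/matrixP => i l; rewrite !mxE.
transitivity (dotv (row l B) (p (lift ord0 i)) - dotv (row l B) (p ord0)); last first.
  by rewrite !H subrr.
rewrite /dotv -sumrB; apply: eq_bigr => j _; rewrite !mxE.
by rewrite mulrBl ![_ * B l j]mulrC.
Qed.

Definition ones (R : realFieldType) : 'rV[R]_6 := const_mx 1.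

Lemma dot_ones_aw (R : realFieldType) T (w : word T) :
  inOmega w -> dotv (ones R) (aw R w) = (T.-1)%:R.
Proof.
move/omega_adj => Hw; rewrite dot_aw //.
rewrite (@eq_psum _ _ (fun _ _ => 1)) => [|a b]; last by rewrite mxE.
by rewrite psum_const size_tuple.
Qed.

Lemma PT_ones (R : realFieldType) T x : PT T x -> dotv (ones R) x = (T.-1)%:R.
Proof. apply: PT_dot; exact: dot_ones_aw. Qed.

Lemma PT_upper (R : realFieldType) T (p : 'I_7 -> 'rV[R]_6) :
  (forall i, PT T (p i)) -> ~~ aff_indep p.
Proof.
move=> Hp; apply/negP => Ip.
have H : (\matrix_(i < 6) (p (lift ord0 i) - p ord0)) *m (ones R)^T = 0.
  apply: (@diff_orth _ _ _ _ _ (fun _ => (T.-1)%:R)) => l i.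
  rewrite -(PT_ones (Hp i)); apply: eq_bigr => j _; by rewrite !mxE.
have fO : row_free (ones R).
  apply/inj_row_free => v Hv; apply/rowP => i; rewrite (ord1 i) mxE.
  have := congr1 (fun M : 'rV[R]_6 => M 0 ord0) Hv.
  by rewrite !mxE big_ord1 mxE mulr1.
by have := rank_orth H Ip fO.
Qed.

Definition Bmat (R : realFieldType) (c : 'rV[R]_6) : 'M[R]_(2, 6) :=
  \matrix_(l < 2, j < 6) (if l == 0 then 1 else c 0 j).

Lemma face_upper (R : realFieldType) T k (p : 'I_6 -> 'rV[R]_6) :
  (forall i, PT T (p i) /\ dotv (cvec R k) (p i) = 0) -> ~~ aff_indep p.
Proof.
move=> Hp; apply/negP => Ip.
have H : (\matrix_(i < 5) (p (lift ord0 i) - p ord0)) *m (Bmat (cvec R k))^T = 0.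
  apply: (@diff_orth _ _ _ _ _ (fun l => if l == 0 then (T.-1)%:R else 0)) => l i.
  have [H1 H2] := Hp i.
  case: l => [[|[|l]] Hl] //=.
  - rewrite -(PT_ones H1); apply: eq_bigr => j _; by rewrite !mxE.
  - rewrite -H2; apply: eq_bigr => j _; by rewrite !mxE.
have fB : row_free (Bmat (cvec R k)).
  apply/inj_row_free => v Hv.
  have E0 := congr1 (fun M : 'rV[R]_6 => M 0 (@Ordinal 6 0 isT)) Hv.
  have E1 := congr1 (fun M : 'rV[R]_6 => M 0 (@Ordinal 6 1 isT)) Hv.
  move: E0 E1; rewrite /= !mxE !big_ord_recl !big_ord0 !mxE /=.
  rewrite !mulr1 !addr0 => E0 E1.
  have : v 0 (lift ord0 ord0) * (3 * k + 1)%:R = 0.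
    rewrite ?natrD ?natrM in E0 E1 *. lra.
  move/eqP; rewrite mulf_eq0 pnatr_eq0 addn1 orbF => /eqP V1.
  rewrite V1 mul0r addr0 in E0.
  by apply/rowP => i; rewrite [RHS]mxE; case: i => [[|[|i]] Hi] //;
    [rewrite -E0 | rewrite -V1]; congr (v _ _); apply: val_inj.
by have := rank_orth H Ip fB.
Qed.

Fixpoint rep m : seq 'I_3 := if m is m'.+1 then [:: o2, o1, o0 & rep m'] else [::].

Lemma size_rep m : size (rep m) = (3 * m)%N.
Proof. by elim: m => //= m ->; lia. Qed.

Lemma rep_head m t : exists t', rep m ++ o2 :: t = o2 :: t'.
Proof. by case: m => [|m]; eexists. Qed.

Lemma psum_rep (V : nmodType) (F : 'I_3 -> 'I_3 -> V) m t :
  psum F (rep m ++ o2 :: t) = psum F [:: o2; o1; o0; o2] *+ m + psum F (o2 :: t).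
Proof.
elim: m => [|m IH]; first by rewrite mulr0n add0r.
have [t' Et] := rep_head m t.
rewrite /= Et !psum2 -Et IH psum1 addr0 mulrS !addrA.
by rewrite !psum2 psum1 addr0 !addrA.
Qed.

Lemma adj_rep m t : adjdiff (rep m ++ o2 :: t) = adjdiff (o2 :: t).
Proof.
elim: m => [|m IH] //.
have [t' Et] := rep_head m t.
by rewrite /= Et !adj2 -Et IH.
Qed.

Lemma psum_W (V : nmodType) (F : 'I_3 -> 'I_3 -> V) pre m t :
  psum F (pre ++ rep m ++ o2 :: t) =
  psum F (rcons pre o2) + psum F [:: o2; o1; o0; o2] *+ m + psum F (o2 :: t).
Proof.
have [t' Et] := rep_head m t.
by rewrite Et psum_cat -Et psum_rep addrA.
Qed.

Lemma adj_W pre m t :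
  adjdiff (pre ++ rep m ++ o2 :: t) = adjdiff (rcons pre o2) && adjdiff (o2 :: t).
Proof.
have [t' Et] := rep_head m t.
by rewrite Et adjdiff_cat -Et adj_rep.
Qed.

Definition Wd n pre t : word (6 * n.+1 + 3) :=
  insubd (nseq_tuple (6 * n.+1 + 3) o0) (pre ++ rep (2 * n) ++ o2 :: t).

Lemma Wd_val n pre t : (size pre + size t = 8)%N ->
  val (Wd n pre t) = pre ++ rep (2 * n) ++ o2 :: t.
Proof.
move=> H; rewrite insubdK // -topredE /= !size_cat size_rep /=; apply/eqP; lia.
Qed.

Lemma PT_aw (R : realFieldType) T (w : word T) : inOmega w -> PT T (aw R w).
Proof.
move=> Hw; exists (fun v => (v == w)%:R); split; first by move=> v; rewrite ler0n.
split; first by move=> v Hv; case: eqP => // E; rewrite E in Hv.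
split; first by rewrite (bigD1 w) //= eqxx big1 ?addr0 // => v /negbTE ->.
rewrite (bigD1 w) //= eqxx scale1r big1 ?addr0 // => v /negbTE ->.
by rewrite scale0r.
Qed.

Definition Fj (R : realFieldType) (j : 'I_6) (a b : 'I_3) : R :=
  (((a == (pair' j).1) && (b == (pair' j).2)) : nat)%:R.

Lemma aw_Wd (R : realFieldType) n pre t j : (size pre + size t = 8)%N ->
  aw R (Wd n pre t) 0 j =
  psum (Fj R j) (rcons pre o2) + psum (Fj R j) [:: o2; o1; o0; o2] *+ (2 * n) +
  psum (Fj R j) (o2 :: t).
Proof. by move=> H; rewrite awE Wd_val // psum_W. Qed.

Lemma omega_Wd n pre t : (size pre + size t = 8)%N ->
  adjdiff (rcons pre o2) -> adjdiff (o2 :: t) -> inOmega (Wd n pre t).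
Proof. by move=> H h1 h2; apply/omega_adj; rewrite Wd_val // adj_W h1. Qed.

Lemma dot_Wd (R : realFieldType) (c : 'rV[R]_6) n pre t : (size pre + size t = 8)%N ->
  adjdiff (rcons pre o2) -> adjdiff (o2 :: t) ->
  dotv c (aw R (Wd n pre t)) =
  psum (fun a b => c 0 (idx_of a b)) (rcons pre o2) +
  psum (fun a b => c 0 (idx_of a b)) [:: o2; o1; o0; o2] *+ (2 * n) +
  psum (fun a b => c 0 (idx_of a b)) (o2 :: t).
Proof.
move=> H h1 h2; rewrite dot_aw; first by rewrite Wd_val // psum_W.
by rewrite Wd_val // adj_W h1.
Qed.

Definition prei (i : nat) : seq 'I_3 :=
  match i with
  | 0 => [:: o2; o1; o0; o2; o1; o0]
  | 1 => [:: o1; o0; o1; o0; o1; o0]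
  | 2 => [:: o1; o0; o2; o0; o2; o0]
  | 3 => [:: o1; o0; o2; o1; o2; o1]
  | 4 => [:: o1; o0; o2; o1; o0]
  | _ => [:: o0; o1; o0; o1; o0; o1]
  end.
Definition ti (i : nat) : seq 'I_3 :=
  match i with 4 => [:: o1; o0; o2] | _ => [:: o1; o0] end.

Lemma size_pt i : (size (prei i) + size (ti i) = 8)%N.
Proof. by case: i => [|[|[|[|[|i]]]]]. Qed.

Lemma adj_pre i : adjdiff (rcons (prei i) o2).
Proof. by case: i => [|[|[|[|[|i]]]]]. Qed.
Lemma adj_t i : adjdiff (o2 :: ti i).
Proof. by case: i => [|[|[|[|[|i]]]]]. Qed.

Definition cf (R : realFieldType) k (a b : nat) : R :=
  match a, b with
  | 0, 1 => (5 * k + 2)%:R | 0, 2 => (2 * k + 1)%:R | 1, 0 => - (4 * k + 1)%:R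
  | 1, 2 => - k%:R | 2, 0 => - k%:R | _, _ => (2 * k + 1)%:R end.

Lemma cvec_idx (R : realFieldType) k (a b : 'I_3) : a != b ->
  cvec R k 0 (idx_of a b) = cf R k (val a) (val b).
Proof.
move=> ab; rewrite mxE idx_valE //.
by case: a ab => [[|[|[|a]]] Ha] //; case: b => [[|[|[|b]]] Hb].
Qed.

Definition pt (R : realFieldType) n (i : nat) : 'rV[R]_6 := aw R (Wd n (prei i) (ti i)).

Lemma pt_PT (R : realFieldType) n i : PT (6 * n.+1 + 3) (pt R n i).
Proof. apply: PT_aw; apply: omega_Wd; [exact: size_pt|exact: adj_pre|exact: adj_t]. Qed.

Section CF.
Variables (R : realFieldType) (k : nat).
Lemma cf01 : cf R k (val o0) (val o1) = (5 * k + 2)%:R. Proof. by []. Qed.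
Lemma cf02 : cf R k (val o0) (val o2) = (2 * k + 1)%:R. Proof. by []. Qed.
Lemma cf10 : cf R k (val o1) (val o0) = - (4 * k + 1)%:R. Proof. by []. Qed.
Lemma cf12 : cf R k (val o1) (val o2) = - k%:R. Proof. by []. Qed.
Lemma cf20 : cf R k (val o2) (val o0) = - k%:R. Proof. by []. Qed.
Lemma cf21 : cf R k (val o2) (val o1) = (2 * k + 1)%:R. Proof. by []. Qed.
End CF.
Definition cfE := (cf01, cf02, cf10, cf12, cf20, cf21).

Lemma pt_face (R : realFieldType) n i : (i < 5)%N -> dotv (cvec R n.+1) (pt R n i) = 0.
Proof.
move=> Hi; rewrite /pt dot_Wd ?size_pt ?adj_pre ?adj_t //.
case: i Hi => [|[|[|[|[|i]]]]] // _; rewrite /= !psum2 !psum1 !cvec_idx // !cfE; ring.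
Qed.

Lemma pt_entry (R : realFieldType) n i j :
  pt R n i 0 j = psum (Fj R j) (rcons (prei i) o2) + psum (Fj R j) [:: o2; o1; o0; o2] *+ (2 * n) +
  psum (Fj R j) (o2 :: ti i).
Proof. by rewrite /pt aw_Wd // size_pt. Qed.

Lemma diff_entry (R : realFieldType) m (p : 'I_m.+1 -> 'rV[R]_6) (v : 'rV[R]_m) j :
  (v *m \matrix_(i < m) (p (lift ord0 i) - p ord0)) 0 j =
  \sum_(i < m) v 0 i * (p (lift ord0 i) 0 j - p ord0 0 j).
Proof. by rewrite mxE; apply: eq_bigr => i _; rewrite !mxE. Qed.

Lemma face_indep (R : realFieldType) n : aff_indep (fun i : 'I_5 => pt R n i).
Proof.
apply/inj_row_free => v Hv.
have E j : \sum_(i < 4) v 0 i * (pt R n (@lift 5 ord0 i) 0 j - pt R n (@ord0 4) 0 j) = 0.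
  by rewrite -(diff_entry (fun i : 'I_5 => pt R n i)) Hv mxE.
have E0 := E (@Ordinal 6 0 isT); have E1 := E (@Ordinal 6 1 isT).
have E2 := E (@Ordinal 6 2 isT); have E3 := E (@Ordinal 6 3 isT).
have E4 := E (@Ordinal 6 4 isT); have E5 := E (@Ordinal 6 5 isT).
move: E0 E1 E2 E3 E4 E5; rewrite !big_ord_recl !big_ord0 !pt_entry /=.
rewrite !psum2 !psum1 /Fj /= => E0 E1 E2 E3 E4 E5.
have h0 : v 0 ord0 = 0 by lra.
have h1 : v 0 (lift ord0 ord0) = 0 by lra.
have h2 : v 0 (lift ord0 (lift ord0 ord0)) = 0 by lra.
have h3 : v 0 (lift ord0 (lift ord0 (lift ord0 ord0))) = 0 by lra.
apply/rowP => i; rewrite [RHS]mxE.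
case: i => [[|[|[|[|i]]]] Hi] //.
- by rewrite -h0; congr (v _ _); apply: val_inj.
- by rewrite -h1; congr (v _ _); apply: val_inj.
- by rewrite -h2; congr (v _ _); apply: val_inj.
- by rewrite -h3; congr (v _ _); apply: val_inj.
Qed.

Lemma PT_indep (R : realFieldType) n : aff_indep (fun i : 'I_6 => pt R n i).
Proof.
apply/inj_row_free => v Hv.
have E j : \sum_(i < 5) v 0 i * (pt R n (@lift 6 ord0 i) 0 j - pt R n (@ord0 5) 0 j) = 0.
  by rewrite -(diff_entry (fun i : 'I_6 => pt R n i)) Hv mxE.
have E0 := E (@Ordinal 6 0 isT); have E1 := E (@Ordinal 6 1 isT).
have E2 := E (@Ordinal 6 2 isT); have E3 := E (@Ordinal 6 3 isT).
have E4 := E (@Ordinal 6 4 isT); have E5 := E (@Ordinal 6 5 isT).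
move: E0 E1 E2 E3 E4 E5; rewrite !big_ord_recl !big_ord0 !pt_entry /=.
rewrite !psum2 !psum1 /Fj /= => E0 E1 E2 E3 E4 E5.
have h0 : v 0 ord0 = 0 by lra.
have h1 : v 0 (lift ord0 ord0) = 0 by lra.
have h2 : v 0 (lift ord0 (lift ord0 ord0)) = 0 by lra.
have h3 : v 0 (lift ord0 (lift ord0 (lift ord0 ord0))) = 0 by lra.
have h4 : v 0 (lift ord0 (lift ord0 (lift ord0 (lift ord0 ord0)))) = 0 by lra.
apply/rowP => i; rewrite [RHS]mxE.
case: i => [[|[|[|[|[|i]]]]] Hi] //.
- by rewrite -h0; congr (v _ _); apply: val_inj.
- by rewrite -h1; congr (v _ _); apply: val_inj.
- by rewrite -h2; congr (v _ _); apply: val_inj.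
- by rewrite -h3; congr (v _ _); apply: val_inj.
- by rewrite -h4; congr (v _ _); apply: val_inj.
Qed.

Theorem proposition11 (R : realFieldType) (k : nat) (hk : (1 <= k)%N) (s : 'S_3) :
  defines_facet (6 * k + 3) (sigma_act s (cvec R k)).
Proof.
split; first by move=> w Hw; exact: valid_sigma.
exists 4%N; case: k hk => // n _.
split.
  split; last exact: PT_upper.
  exists (fun i : 'I_6 => pt R n i); split; [move=> i; exact: pt_PT | exact: PT_indep].
apply: (@affdim_transfer R (fun x => PT (6 * n.+1 + 3) x /\ dotv (cvec R n.+1) x = 0) _ (rho (s^-1)%g)).
  split; last by move=> p Hp; exact: face_upper Hp.
  exists (fun i : 'I_5 => pt R n i); split; last exact: face_indep.
  by move=> i; split; [exact: pt_PT | apply: pt_face].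
by move=> x; exact: face_iff.
Qed.
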